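(* Let $T$ be a trigraph in $\mathcal F$ that is either the complement of a bipartite trigraph or the complement of a line trigraph. If $T$ is favorable, then either $T$ is a graph (has no switchable pair), or $T$ has an even pair disjoint from its switchable component.
   Context: A trigraph $T$ consists of a finite set $V(T)$ and a map $\theta:\binom{V(T)}{2}\to\{-1,0,1\}$. Two distinct vertices $u,v$ are strongly adjacent if $\theta(uv)=1$, strongly antiadjacent if $\theta(uv)=-1$, and semiadjacent (a switchable pair) if $\theta(uv)=0$; they are adjacent if $\theta(uv)\in\{0,1\}$ and antiadjacent if $\theta(uv)\in\{0,-1\}$. $N(v)$ is the set of vertices adjacent to $v$. The complement $\overline T$ has vertex set $V(T)$ and adjacency function $-\theta$. For $X\subseteq V(T)$, $T|X$ is the trigraph on $X$ with $\theta$ restricted, and $T\setminus X=T|(V(T)\setminus X)$. A clique (strong clique) is a set of pairwise adjacent (strongly adjacent) vertices; a strongly stable set is a set of pairwise strongly antiadjacent vertices. $T$ is a graph if it has no switchable pair. The full realization of $T$ is the graph on $V(T)$ whose edges are the adjacent pairs. A path is a sequence of distinct vertices $p_1,\dots,p_k$ such that $p_i,p_j$ are adjacent when $|i-j|=1$ and antiadjacent when $|i-j|>1$; its length is $k-1$. A hole of length $k\ge5$ consists of vertices $h_1,\dots,h_k$ with $h_i,h_j$ adjacent if $|i-j|\in\{1,k-1\}$ and antiadjacent otherwise; an antihole is an induced subtrigraph whose complement is a hole. $T$ is Berge if it contains no hole of odd length and no antihole of odd length. An even pair of $T$ is a strongly antiadjacent pair $\{u,v\}$ such that every path from $u$ to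 $v$ in $T$ has even length. $\Sigma(T)$ is the graph on $V(T)$ whose edges are the switchable pairs of $T$; a switchable component is a connected component of $\Sigma(T)$ with at least two vertices. $\mathcal F$ is the class of Berge trigraphs $T$ such that: (1) $T$ has at most one switchable component, and it has at most two edges; (2) if the switchable component has exactly one edge $xy$, then $N(x)\cap N(y)=\emptyset$ (it is called small); (3) if it has two edges, with $v$ the vertex of degree two in $\Sigma(T)$ and $x,y$ its neighbours, then $v$ is strongly anticomplete to $V(T)\setminus\{v,x,y\}$, $x$ is strongly antiadjacent to $y$, and $N(x)\cap N(y)=\{v\}$ (it is called light). For $T\in\mathcal F$, $D$ denotes the vertex set of its switchable component ($D=\emptyset$ if $T$ has no switchable pair). A pair $\{u,v\}$ is disjoint from the switchable component if $\{u,v\}\cap D=\emptyset$. A trigraph $T\in\mathcal F$ is favorable if (1) $|V(T)|\ge5$; (2) $T$ has a strongly antiadjacent pair $\{u,v\}$ disjoint from $D$; and (3) if $D=\{x,y\}$ is small, then at least one of $V(T)\setminus(D\cup N(x))$, $V(T)\setminus(D\cup N(y))$ is not a clique. $T$ is bipartite if $V(T)$ can be partitioned into two strongly stable sets. $T$ is a line trigraph if its full realization is the line graph of a bipartite graph and every clique of size at least $3$ in $T$ is a strong clique. $T$ is the complement of a bipartite (line) trigraph if $\overline T$ is a bipartite (line) trigraph. *)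

(* Defs.v *)
From mathcomp Require Import all_boot.
Set Implicit Arguments. Unset Strict Implicit. Unset Printing Implicit Defensive.

(* TAnti = -1, TSemi = 0, TStrong = 1 *)
Inductive tri := TAnti | TSemi | TStrong.

Definition tri_eqb (a b : tri) : bool :=
  match a, b with
  | TAnti, TAnti | TSemi, TSemi | TStrong, TStrong => true
  | _, _ => false end.

Section Trigraph.
Variable V : finType.
Implicit Type theta : V -> V -> tri.

(* theta is a map on unordered pairs: symmetric; diagonal values are ignored *)
Definition symmetric_tri theta := forall u v, theta u v = theta v u.

Definition tneg (a : tri) : tri :=
  match a with TAnti => TStrong | TSemi => TSemi | TStrong => TAnti end.

Definition complement theta : V -> V -> tri := fun u v => tneg (theta u v).

Definition strongly_adjacent theta (u v : V) : bool :=
  (u != v) && tri_eqb (theta u v) TStrong.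
Definition strongly_antiadjacent theta (u v : V) : bool :=
  (u != v) && tri_eqb (theta u v) TAnti.
Definition semiadjacent theta (u v : V) : bool :=
  (u != v) && tri_eqb (theta u v) TSemi.
Definition adjacent theta (u v : V) : bool :=
  (u != v) && ~~ tri_eqb (theta u v) TAnti.
Definition antiadjacent theta (u v : V) : bool :=
  (u != v) && ~~ tri_eqb (theta u v) TStrong.

Definition nbhd theta (v : V) : {set V} := [set w | adjacent theta v w].

Definition clique theta (S : {set V}) : Prop :=
  forall u v, u \in S -> v \in S -> u != v -> adjacent theta u v.
Definition strong_clique theta (S : {set V}) : Prop :=
  forall u v, u \in S -> v \in S -> u != v -> strongly_adjacent theta u v.
Definition strongly_stable theta (S : {set V}) : Prop :=
  forall u v, u \in S -> v \in S -> u != v -> strongly_antiadjacent theta u v.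

Definition is_graph theta : Prop := forall u v, ~~ semiadjacent theta u v.

Definition is_path theta (k : nat) (p : 'I_k.+1 -> V) : Prop :=
  injective p /\
  forall i j : 'I_k.+1,
    ((i.+1 == j :> nat) || (j.+1 == i :> nat) -> adjacent theta (p i) (p j)) /\
    (i.+1 < j \/ j.+1 < i -> antiadjacent theta (p i) (p j)).

Definition is_hole theta (k : nat) (h : 'I_k -> V) : Prop :=
  5 <= k /\ injective h /\
  forall i j : 'I_k, i != j ->
    (((i.+1 %% k == j) || (j.+1 %% k == i)) -> adjacent theta (h i) (h j)) /\
    (~~ ((i.+1 %% k == j) || (j.+1 %% k == i)) -> antiadjacent theta (h i) (h j)).

Definition is_antihole theta (k : nat) (h : 'I_k -> V) : Prop :=
  is_hole (complement theta) h.

Definition berge theta : Prop :=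
  forall (k : nat) (h : 'I_k -> V), odd k -> ~ is_hole theta h /\ ~ is_antihole theta h.

Definition even_pair theta (u v : V) : Prop :=
  strongly_antiadjacent theta u v /\
  forall (k : nat) (p : 'I_k.+1 -> V),
    is_path theta p -> p ord0 = u -> p ord_max = v -> ~~ odd k.

Definition sigma_rel theta : rel V := fun u v => semiadjacent theta u v.

(* vertices lying in a switchable component (= non-isolated vertices of Sigma) *)
Definition switch_verts theta : {set V} :=
  [set v | [exists u, semiadjacent theta u v]].

Definition switch_edges theta : {set {set V}} :=
  [set e | [exists u, exists v, (e == [set u; v]) && semiadjacent theta u v]].

Definition in_F theta : Prop :=
  berge theta /\
  (* (1) at most one switchable component, with at most two edges *)
  (forall u v, u \in switch_verts theta -> v \in switch_verts theta ->
      connect (sigma_rel theta) u v) /\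
  #|switch_edges theta| <= 2 /\
  (forall x y, switch_edges theta = [set [set x; y]] ->
      nbhd theta x :&: nbhd theta y = set0) /\
  (forall v x y, x != y ->
      switch_edges theta = [set [set v; x]; [set v; y]] ->
      (forall w, w \notin [set v; x; y] -> strongly_antiadjacent theta v w) /\
      strongly_antiadjacent theta x y /\
      nbhd theta x :&: nbhd theta y = [set v]).

Definition favorable theta : Prop :=
  5 <= #|V| /\
  (exists u v, [/\ strongly_antiadjacent theta u v,
                   u \notin switch_verts theta & v \notin switch_verts theta]) /\
  (forall x y, x != y -> switch_verts theta = [set x; y] ->
      ~ clique theta (~: (switch_verts theta :|: nbhd theta x)) \/
      ~ clique theta (~: (switch_verts theta :|: nbhd theta y))).

Definition bipartite_trigraph theta : Prop :=
  exists A : {set V}, strongly_stable theta A /\ strongly_stable theta (~: A).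

(* The full realization is the line graph of a bipartite graph H: vertices of
   T are identified (injectively) with edges (a, b) of H, a on the left side,
   b on the right side (both sides indexed by nat); two vertices are adjacent
   iff the edges share an endpoint. *)
Definition line_trigraph theta : Prop :=
  (exists f : V -> nat * nat, injective f /\
     forall u v, u != v ->
       (adjacent theta u v <-> ((f u).1 = (f v).1 \/ (f u).2 = (f v).2))) /\
  (forall S : {set V}, clique theta S -> 3 <= #|S| -> strong_clique theta S).

End Trigraph.

(* Main.v *)
Require Import Defs.
From mathcomp Require Import all_boot.
From Stdlib Require Import Classical Lia.
From mathcomp Require Import zify.
Set Implicit Arguments. Unset Strict Implicit. Unset Printing Implicit Defensive.

Section S.
Variable V : finType.
Variable theta : V -> V -> tri.
Hypothesis Hsym : symmetric_tri theta.

Lemma adj_sym u v : adjacent theta u v = adjacent theta v u.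
Proof. by rewrite /adjacent eq_sym Hsym. Qed.
Lemma semi_sym u v : semiadjacent theta u v = semiadjacent theta v u.
Proof. by rewrite /semiadjacent eq_sym Hsym. Qed.
Lemma cadj_sym u v : adjacent (complement theta) u v = adjacent (complement theta) v u.
Proof. by rewrite /adjacent /complement eq_sym Hsym. Qed.

Lemma semiE u v : semiadjacent theta u v -> u != v /\ theta u v = TSemi.
Proof. rewrite /semiadjacent; case/andP=> ->; by case: (theta u v). Qed.
Lemma nadjE u v : u != v -> ~~ adjacent theta u v -> theta u v = TAnti.
Proof. rewrite /adjacent => ->; by case: (theta u v). Qed.
Lemma adjE u v : adjacent theta u v -> u != v /\ theta u v <> TAnti.
Proof. rewrite /adjacent; case/andP=> ->; by case: (theta u v). Qed.
Lemma cadjI u v : u != v -> theta u v <> TStrong -> adjacent (complement theta) u v.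
Proof. rewrite /adjacent /complement => -> /=; by case: (theta u v). Qed.
Lemma cadjA u v : u != v -> theta u v = TAnti -> adjacent (complement theta) u v.
Proof. by move=> H E; apply: cadjI; rewrite ?E. Qed.
Lemma cadjS u v : u != v -> theta u v = TSemi -> adjacent (complement theta) u v.
Proof. by move=> H E; apply: cadjI; rewrite ?E. Qed.
Lemma cadjE u v : adjacent (complement theta) u v -> theta u v <> TStrong.
Proof. rewrite /adjacent /complement; case/andP=> _; by case: (theta u v). Qed.

Lemma share_contra (u z v w : nat * nat) :
  (u.1 = z.1 \/ u.2 = z.2) -> (v.1 = z.1 \/ v.2 = z.2) -> ~ (u.1 = v.1 \/ u.2 = v.2) ->
  (z.1 = w.1 \/ z.2 = w.2) -> ~ (u.1 = w.1 \/ u.2 = w.2) -> ~ (v.1 = w.1 \/ v.2 = w.2) ->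
  False.
Proof. case: u z v w => [u1 u2] [z1 z2] [v1 v2] [w1 w2] /=; lia. Qed.

Lemma in3 (x a b c : V) : x \in [set a;b;c] -> [\/ x = a, x = b | x = c].
Proof. rewrite !inE; case/orP => [/orP[]|] /eqP->; by constructor. Qed.

Lemma clique3 a b c : line_trigraph (complement theta) -> a != b -> a != c -> b != c ->
  adjacent (complement theta) a b -> adjacent (complement theta) a c ->
  adjacent (complement theta) b c ->
  strongly_adjacent (complement theta) a b.
Proof.
move=> [_ Hcl] Hab Hac Hbc Hab' Hac' Hbc'.
apply: (Hcl [set a; b; c]); rewrite ?inE ?eqxx ?orbT //=.
- move=> x y /in3[]-> /in3[]->; rewrite ?eqxx // => _;
  by rewrite // cadj_sym.
- have -> : [set a; b; c] = c |: [set a; b] by rewrite setUC.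
  by rewrite cardsU1 cards2 !inE negb_or Hab ![c == _]eq_sym (negbTE Hac) (negbTE Hbc).
Qed.


Lemma key z z' u v :
  line_trigraph (complement theta) ->
  semiadjacent theta z z' ->
  (forall a b, semiadjacent theta a b -> a \in [set z; z']) ->
  u != z -> v != z -> theta u z = TAnti -> theta v z = TAnti ->
  ~ adjacent theta u v.
Proof.
move=> Hline Hzz Hsw Huz Hvz Htu Htv Hadj.
have Hline' := Hline.
move: Hline' => [[f [finj Hf]] _].
have [Huv Htuv] := adjE Hadj.
have [Hzz' Htzz] := semiE Hzz.
have Huz' : u != z'.
{ apply/eqP=> E; subst u. by rewrite Hsym Htzz in Htu. }
have Hvz' : v != z'.
{ apply/eqP=> E; subst v. by rewrite Hsym Htzz in Htv. }
have Hs : theta u v = TStrong.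
{ move: Htuv; case E: (theta u v) => // _.
  have : semiadjacent theta u v by rewrite /semiadjacent Huv E.
  by move/Hsw; rewrite !inE (negbTE Huz) (negbTE Huz'). }
have H1 := (Hf u z Huz).1 (cadjA Huz Htu).
have H2 := (Hf v z Hvz).1 (cadjA Hvz Htv).
have H3 : ~ ((f u).1 = (f v).1 \/ (f u).2 = (f v).2).
{ by move=> /(Hf u v Huv).2 /cadjE; rewrite Hs. }
have H4 := (Hf z z' Hzz').1 (cadjS Hzz' Htzz).
have Hnot : forall w, w != z -> w != z' -> theta w z = TAnti ->
   ~ ((f w).1 = (f z').1 \/ (f w).2 = (f z').2).
{ move=> w Hwz Hwz' Htw /(Hf w z' Hwz').2 Hc.
  have Hc1 := cadjA Hwz Htw.
  have Hzw : z != w by rewrite eq_sym.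
  have Hz'w : z' != w by rewrite eq_sym.
  have := clique3 Hline Hzz' Hzw Hz'w (cadjS Hzz' Htzz) _ _.
  rewrite /strongly_adjacent /complement Htzz andbF.
  move=> H; have := H (ltac:(by rewrite cadj_sym)) (ltac:(by rewrite cadj_sym)); done. }
exact: (share_contra H1 H2 H3 H4 (Hnot u Huz Huz' Htu) (Hnot v Hvz Hvz' Htv)).
Qed.


Lemma claimA z z' a b :
  line_trigraph (complement theta) ->
  semiadjacent theta z z' ->
  (forall a b, semiadjacent theta a b -> a \in [set z; z']) ->
  a \notin nbhd theta z -> b \notin nbhd theta z -> ~ adjacent theta a b.
Proof.
move=> Hline Hzz Hsw Ha Hb Hab; rewrite !inE in Ha Hb.
case: (eqVneq a z) => [E|Haz]; first by subst a; rewrite Hab in Hb.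
case: (eqVneq b z) => [E|Hbz]; first by subst b; rewrite adj_sym Hab in Ha.
apply: (key Hline Hzz Hsw Haz Hbz _ _ Hab).
- by rewrite Hsym; apply: nadjE => //; rewrite eq_sym.
- by rewrite Hsym; apply: nadjE => //; rewrite eq_sym.
Qed.

Lemma claimB z z' a b :
  line_trigraph (complement theta) ->
  semiadjacent theta z z' ->
  (forall a b, semiadjacent theta a b -> a \in [set z; z']) ->
  nbhd theta z :&: nbhd theta z' = set0 ->
  a \in nbhd theta z -> b \in nbhd theta z -> ~ adjacent theta a b.
Proof.
move=> Hline Hzz Hsw Hdisj Ha Hb.
have Ha' : a \notin nbhd theta z'.
{ apply/negP => H; have : a \in nbhd theta z :&: nbhd theta z' by rewrite inE Ha H.
  by rewrite Hdisj inE. }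
have Hb' : b \notin nbhd theta z'.
{ apply/negP => H; have : b \in nbhd theta z :&: nbhd theta z' by rewrite inE Hb H.
  by rewrite Hdisj inE. }
apply: (claimA (z:=z') (z':=z)) => //; first by rewrite semi_sym.
by move=> c d /Hsw; rewrite setUC.
Qed.

Lemma parity (side : V -> bool) k (p : 'I_k.+1 -> V) :
  is_path theta p -> (forall a b, adjacent theta a b -> side a != side b) ->
  side (p ord_max) = side (p ord0) (+) odd k.
Proof.
move=> [_ Hp] Hs.
suff H : forall n, n <= k -> side (p (inord n)) = side (p ord0) (+) odd n.
{ have -> : (ord_max : 'I_k.+1) = inord k by apply: val_inj; rewrite /= inordK.
  exact: H. }
elim=> [|n IH] Hn.
- have -> : (inord 0 : 'I_k.+1) = ord0 by apply: val_inj; rewrite /= inordK.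
  by rewrite addbF.
- have Hadj : adjacent theta (p (inord n)) (p (inord n.+1)).
  { apply: (Hp _ _).1; rewrite !inordK ?eqxx //; lia. }
  have := Hs _ _ Hadj; rewrite IH; last by lia.
  rewrite /=.
  case: (side (p (inord n.+1))); case: (side (p ord0)); by case: (odd n).
Qed.

Lemma evenL z z' u w :
  line_trigraph (complement theta) ->
  semiadjacent theta z z' ->
  (forall a b, semiadjacent theta a b -> a \in [set z; z']) ->
  nbhd theta z :&: nbhd theta z' = set0 ->
  u \notin nbhd theta z -> w \notin nbhd theta z -> u != w -> ~~ adjacent theta u w ->
  even_pair theta u w.
Proof.
move=> Hline Hzz Hsw Hdisj Hu Hw Huw Hn; split.
  by rewrite /strongly_antiadjacent Huw (nadjE Huw Hn).
move=> k p Hp H0 Hk.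
have := @parity (fun a => a \in nbhd theta z) k p Hp.
rewrite Hk H0 (negbTE Hu) (negbTE Hw) /= => H.
suff : false = odd k by move=> <-.
apply: H => a b Hab.
case Ea: (a \in nbhd theta z); case Eb: (b \in nbhd theta z) => //.
- by case: (claimB Hline Hzz Hsw Hdisj Ea Eb Hab).
- by case: (claimA Hline Hzz Hsw (negbT Ea) (negbT Eb) Hab).
Qed.


Lemma santiE u v : strongly_antiadjacent theta u v -> u != v /\ theta u v = TAnti.
Proof. rewrite /strongly_antiadjacent; case/andP=> ->; by case: (theta u v). Qed.

Lemma stabS S a b : strongly_stable (complement theta) S -> a \in S -> b \in S -> a != b ->
  theta a b = TStrong.
Proof.
move=> H Ha Hb Hab; move: (H a b Ha Hb Hab).
rewrite /strongly_antiadjacent /complement Hab /=; by case: (theta a b).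
Qed.

Lemma sameS A a b : strongly_stable (complement theta) A ->
  strongly_stable (complement theta) (~: A) ->
  (a \in A) = (b \in A) -> a != b -> theta a b = TStrong.
Proof.
move=> HA HnA E Hab; case Ea: (a \in A).
- by apply: (stabS HA) => //; rewrite -E.
- by apply: (stabS HnA) => //; rewrite inE ?Ea // -E Ea.
Qed.

Lemma tri3 (A : {set V}) (a b c : V) : ((a \in A) = (b \in A)) \/ ((a \in A) = (c \in A)) \/ ((b \in A) = (c \in A)).
Proof. by case: (a \in A); case: (b \in A); case: (c \in A); auto. Qed.

Lemma bip_light A v x y : strongly_stable (complement theta) A ->
  strongly_stable (complement theta) (~: A) ->
  theta v x = TSemi -> theta v y = TSemi -> theta x y = TAnti ->
  v != x -> v != y -> x != y -> False.
Proof.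
move=> HA HnA H1 H2 H3 H4 H5 H6.
case: (tri3 A v x y) => [E|[E|E]].
- by rewrite (sameS HA HnA E H4) in H1.
- by rewrite (sameS HA HnA E H5) in H2.
- by rewrite (sameS HA HnA E H6) in H3.
Qed.

Lemma bip_clique A z : strongly_stable (complement theta) A ->
  strongly_stable (complement theta) (~: A) ->
  z \in switch_verts theta ->
  clique theta (~: (switch_verts theta :|: nbhd theta z)).
Proof.
move=> HA HnA Hz u w; rewrite !in_setC !in_setU !negb_or => /andP[Hu1 Hu2] /andP[Hw1 Hw2] Huw.
have Huz : u != z by apply/eqP => E; subst u; rewrite Hz in Hu1.
have Hwz : w != z by apply/eqP => E; subst w; rewrite Hz in Hw1.
have Tu : theta u z = TAnti.
{ rewrite Hsym; apply: nadjE; [by rewrite eq_sym | by rewrite inE in Hu2]. }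
have Tw : theta w z = TAnti.
{ rewrite Hsym; apply: nadjE; [by rewrite eq_sym | by rewrite inE in Hw2]. }
rewrite /adjacent Huw /=.
case: (tri3 A u z w) => [E|[E|E]].
- by rewrite (sameS HA HnA E Huz) in Tu.
- by rewrite (sameS HA HnA E Huw).
- by rewrite Hsym (sameS HA HnA E (_ : z != w)) // in Tw; rewrite eq_sym.
Qed.

Lemma memE c d : semiadjacent theta c d -> [set c; d] \in switch_edges theta.
Proof.
move=> Hcd; rewrite inE; apply/existsP; exists c; apply/existsP; exists d; by rewrite eqxx Hcd.
Qed.

Lemma pairL w a b : w \in [set a; b] -> semiadjacent theta a b ->
  exists x, [set a; b] = [set w; x] /\ semiadjacent theta w x.
Proof.
rewrite !inE => /orP[]/eqP-> H; first by exists b.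
by exists a; rewrite setUC semi_sym.
Qed.

Lemma structure : in_F theta -> ~ is_graph theta ->
 (exists x y, [/\ x != y, semiadjacent theta x y & switch_edges theta = [set [set x; y]]]) \/
 (exists v x y, [/\ x != y, semiadjacent theta v x, semiadjacent theta v y &
     switch_edges theta = [set [set v; x]; [set v; y]]]).
Proof.
move=> [_ [Hconn [Hcard _]]] Hng.
have [a [b Hab]] : exists a b, semiadjacent theta a b.
{ apply: NNPP => H; apply: Hng => u v; apply/negP => Huv; apply: H; by exists u, v. }
have Ee : forall e, e \in switch_edges theta -> exists c d, e = [set c; d] /\ semiadjacent theta c d.
{ move=> e; rewrite inE => /existsP[c /existsP[d /andP[/eqP -> Hcd]]]; by exists c, d. }
case: (boolP (switch_edges theta \subset [set [set a; b]])) => HE.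
{ left; exists a, b; split => //; first by case: (semiE Hab).
  apply/eqP; rewrite eqEsubset HE sub1set; exact: memE. }
right.
have [e2 He2 Hne] := subsetPn HE. rewrite inE in Hne.
have [c [d [Ee2 Hcd]]] := Ee _ He2.
have HE2 : switch_edges theta = [set [set a; b]; e2].
{ apply/esym/eqP; rewrite eqEcard; apply/andP; split.
  - apply/subsetP => e /set2P[]->; [exact: memE | done].
  - by rewrite cards2 eq_sym Hne. }
have [w Hw1 Hw2] : exists2 w, w \in [set a; b] & w \in e2.
{ apply: NNPP => Hno.
  have F : forall t, t \in e2 -> t \notin [set a; b].
  { move=> t Ht; apply/negP => H; apply: Hno; by exists t. }
  have Ha : a \in switch_verts theta by rewrite inE; apply/existsP; exists b; rewrite semi_sym.
  have Hc : c \in switch_verts theta by rewrite inE; apply/existsP; exists d; rewrite semi_sym.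
  have Hcl : closed (sigma_rel theta) [set a; b].
  { move=> x y Hxy; have := memE Hxy; rewrite HE2 => /set2P[] Exy.
    - by rewrite -Exy !inE !eqxx ?orbT.
    - have Hx : x \in e2 by rewrite -Exy !inE eqxx.
      have Hy : y \in e2 by rewrite -Exy !inE eqxx orbT.
      by rewrite (negbTE (F x Hx)) (negbTE (F y Hy)). }
  have := closed_connect Hcl (Hconn a c Ha Hc).
  rewrite !inE eqxx /= => Hc'.
  have Hce2 : c \in e2 by rewrite Ee2 !inE eqxx.
  by move: (F c Hce2); rewrite !inE -Hc'. }
have [x [Ex Hwx]] := pairL Hw1 Hab.
rewrite Ee2 in Hw2.
have [y [Ey Hwy]] := pairL Hw2 Hcd.
exists w, x, y; split => //.
- apply/eqP => Exy; subst y. by rewrite Ee2 Ey -Ex eqxx in Hne.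
- by rewrite HE2 Ex Ee2 Ey.
Qed.

End S.

Theorem proposition4p8 (V : finType) (theta : V -> V -> tri) :
  symmetric_tri theta ->
  in_F theta ->
  (bipartite_trigraph (complement theta) \/ line_trigraph (complement theta)) ->
  favorable theta ->
  is_graph theta \/
  exists u v, [/\ u \notin switch_verts theta, v \notin switch_verts theta
                & even_pair theta u v].
Proof.
move=> Hsym HF Hbl Hfav.
case: (classic (is_graph theta)) => Hg; [by left | right].
case: (structure Hsym HF Hg) => [[x [y [Hxy Hsxy HE]]] | [v [x [y [Hxy Hvx Hvy HE]]]]].
- have Hsw : forall a b, semiadjacent theta a b -> a \in [set x; y].
  { move=> a b Hab; have := memE Hab; rewrite HE inE => /eqP E.
    by rewrite -E !inE eqxx. }
  have Hsv : switch_verts theta = [set x; y].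
  { apply/setP => c; rewrite inE; apply/existsP/idP.
    - by case=> u Hu; apply: (Hsw c u); rewrite semi_sym.
    - rewrite !inE => /orP[]/eqP->; [exists y; by rewrite semi_sym | by exists x]. }
  have Hdisj := HF.2.2.2.1 x y HE.
  have Hfav3 := Hfav.2.2 x y Hxy Hsv.
  case: Hbl => [[A [HA HnA]] | Hline].
  + exfalso. case: Hfav3 => Hnc; apply: Hnc; apply: (bip_clique Hsym HA HnA);
      by rewrite Hsv !inE eqxx ?orbT.
  + have gen : forall z z', semiadjacent theta z z' ->
      (forall a b, semiadjacent theta a b -> a \in [set z; z']) ->
      nbhd theta z :&: nbhd theta z' = set0 ->
      ~ clique theta (~: (switch_verts theta :|: nbhd theta z)) ->
      exists u v, [/\ u \notin switch_verts theta, v \notin switch_verts theta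
                & even_pair theta u v].
    { move=> z z' Hzz Hsw' Hd Hnc; apply: NNPP => Hno; apply: Hnc => u w Hu Hw Huw.
      apply: NNPP => Hnadj; apply: Hno; exists u, w.
      move: Hu Hw; rewrite !in_setC !in_setU !negb_or => /andP[Hu1 Hu2] /andP[Hw1 Hw2].
      split => //. apply: (evenL Hsym Hline Hzz Hsw' Hd) => //; by apply/negP. }
    case: Hfav3 => Hnc.
    * exact: (gen x y Hsxy Hsw Hdisj Hnc).
    * apply: (gen y x _ _ _ Hnc); first by rewrite semi_sym.
      - by move=> a b /Hsw; rewrite setUC.
      - by rewrite setIC.
- have [_ [Hxy' _]] := HF.2.2.2.2 v x y Hxy HE.
  have [Hvx1 Hvx2] := semiE Hvx.
  have [Hvy1 Hvy2] := semiE Hvy.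
  have [_ Hxy2] := santiE Hxy'.
  exfalso; case: Hbl => [[A [HA HnA]] | Hline].
  + exact: (bip_light HA HnA Hvx2 Hvy2 Hxy2 Hvx1 Hvy1 Hxy).
  + have := clique3 Hsym Hline Hvx1 Hvy1 Hxy (cadjS Hvx1 Hvx2) (cadjS Hvy1 Hvy2) (cadjA Hxy Hxy2).
    by rewrite /strongly_adjacent /complement Hvx2 andbF.
Qed.
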